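(* Let $G$ be a finite simple graph that contains no induced subgraph isomorphic to a banner or to $C_5$, and let $A$ be an odd antihole of $G$ (an induced subgraph). Suppose some two vertices of $A$ belong to a co-triangle of $G$. Then there is a homogeneous set $H$ of $G$ such that $H$ contains all vertices of $A$ and no co-triangle of $G[H]$ contains two vertices of $A$.
   Context: A hole is a chordless (induced) cycle with at least four vertices; it is odd if it has an odd number of vertices. An antihole is the complement of a hole; an odd antihole is the complement of an odd hole. $C_5$ is the chordless cycle on five vertices. A banner is the graph consisting of a hole on four vertices together with one additional vertex adjacent to exactly one vertex of that hole. A co-triangle is a set of three pairwise non-adjacent vertices. For $X \subseteq V(G)$, $G[X]$ is the subgraph induced by $X$. A set $H \subseteq V(G)$ is homogeneous if $2 \leq |H| < |V(G)|$ and every vertex of $V(G)\setminus H$ is either adjacent to all vertices of $H$ or to no vertex of $H$. *)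

(* Defs.v *)
From mathcomp Require Import all_boot.
Set Implicit Arguments. Unset Strict Implicit. Unset Printing Implicit Defensive.

Definition simple_graph (T : finType) (e : rel T) : Prop :=
  symmetric e /\ irreflexive e.

Definition has_induced (T : finType) (e : rel T) (F : finType) (f : rel F) : Prop :=
  exists h : F -> T, injective h /\ forall x y, e (h x) (h y) = f x y.

Definition cyc_adj (k : nat) (i j : 'I_k) : bool :=
  (i.+1 %% k == j) || (j.+1 %% k == i).

Definition C5_rel : rel 'I_5 := fun i j => cyc_adj i j.

(* banner: hole 0-1-2-3-0 plus vertex 4 adjacent only to 0 *)
Definition banner_rel : rel 'I_5 := fun i j =>
  let a := nat_of_ord i in let b := nat_of_ord j in
  [|| (a == 0) && (b == 1), (a == 1) && (b == 0),
      (a == 1) && (b == 2), (a == 2) && (b == 1),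
      (a == 2) && (b == 3), (a == 3) && (b == 2),
      (a == 3) && (b == 0), (a == 0) && (b == 3),
      (a == 4) && (b == 0) | (a == 0) && (b == 4)].

(* A is (the vertex set of) an odd antihole of G: G[A] is the complement of a
   chordless cycle of odd length k >= 4 (hence k >= 5). *)
Definition odd_antihole (T : finType) (e : rel T) (A : {set T}) : Prop :=
  exists k : nat, exists s : 'I_k -> T,
    [/\ odd k, 4 <= k, injective s, A = [set s i | i in 'I_k] &
        forall i j : 'I_k, i != j -> e (s i) (s j) = ~~ cyc_adj i j].

Definition cotriangle (T : finType) (e : rel T) (x y z : T) : bool :=
  [&& x != y, y != z, x != z, ~~ e x y, ~~ e y z & ~~ e x z].

Definition homogeneous (T : finType) (e : rel T) (H : {set T}) : Prop :=
  2 <= #|H| < #|T| /\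
  forall v, v \notin H -> (forall h, h \in H -> e v h) \/ (forall h, h \in H -> ~~ e v h).

(* Main.v *)
Require Import Defs.
From mathcomp Require Import all_boot zify.
From Stdlib Require Import Classical.
Set Implicit Arguments. Unset Strict Implicit.

Definition nadj (T : finType) (e : rel T) (u v : T) := (u != v) && ~~ e u v.

Lemma nadj_sym (T : finType) (e : rel T) : symmetric e -> forall u v, nadj e u v = nadj e v u.
Proof. by move=> sym u v; rewrite /nadj eq_sym sym. Qed.

Lemma eE (T : finType) (e : rel T) : irreflexive e -> forall u v, e u v = (u != v) && ~~ nadj e u v.
Proof.
move=> irr u v; rewrite /nadj; case: eqP => [->|_] /=; first by rewrite irr.
by rewrite negbK.
Qed.

Lemma e_neq (T : finType) (e : rel T) : irreflexive e -> forall u v, e u v -> u != v.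
Proof. by move=> irr u v; apply: contraTneq => ->; rewrite irr. Qed.

Lemma banner_of (T : finType) (e : rel T) p q r s t :
  symmetric e -> irreflexive e ->
  nadj e p q -> nadj e q r -> nadj e p r -> nadj e r s -> nadj e s t ->
  e p s -> e q s -> e p t -> e q t -> e r t -> has_induced e banner_rel.
Proof.
move=> sym irr /andP[npq epq] /andP[nqr eqr] /andP[npr epr] /andP[nrs ers] /andP[nst est] eps eqs ept eqt ert.
have nps := e_neq irr eps; have nqs := e_neq irr eqs; have npt := e_neq irr ept.
have nqt := e_neq irr eqt; have nrt := e_neq irr ert.
pose h (x : 'I_5) := match val x with 0 => t | 1 => p | 2 => s | 3 => q | _ => r end.
exists h; split.
  move=> [[|[|[|[|[|x]]]]] hx] [[|[|[|[|[|y]]]]] hy]; rewrite /h /= => E;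
  try (by apply: val_inj); try (by case: hx); try (by case: hy);
  exfalso; move/eqP: E; apply/negP; by rewrite // eq_sym.
move=> [[|[|[|[|[|x]]]]] hx] [[|[|[|[|[|y]]]]] hy]; rewrite /h /banner_rel /=;
  try (by case: hx); try (by case: hy);
  first [ by rewrite irr | by apply/idP | by apply/idP; rewrite sym
        | by apply/negbTE | by apply/negbTE; rewrite sym ].
Qed.

Lemma c5_of (T : finType) (e : rel T) v0 v1 v2 v3 v4 :
  symmetric e -> irreflexive e ->
  nadj e v0 v1 -> nadj e v1 v2 -> nadj e v2 v3 -> nadj e v3 v4 -> nadj e v4 v0 ->
  e v0 v2 -> e v1 v3 -> e v2 v4 -> e v3 v0 -> e v4 v1 -> has_induced e C5_rel.
Proof.
move=> sym irr /andP[n01 e01] /andP[n12 e12] /andP[n23 e23] /andP[n34 e34] /andP[n40 e40] e02 e13 e24 e30 e41.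
have n02 := e_neq irr e02; have n13 := e_neq irr e13; have n24 := e_neq irr e24.
have n30 := e_neq irr e30; have n41 := e_neq irr e41.
pose h (x : 'I_5) := match val x with 0 => v0 | 1 => v2 | 2 => v4 | 3 => v1 | _ => v3 end.
exists h; split.
  move=> [[|[|[|[|[|x]]]]] hx] [[|[|[|[|[|y]]]]] hy]; rewrite /h /= => E;
  try (by apply: val_inj); try (by case: hx); try (by case: hy);
  exfalso; move/eqP: E; apply/negP; by rewrite // eq_sym.
move=> [[|[|[|[|[|x]]]]] hx] [[|[|[|[|[|y]]]]] hy]; rewrite /h /C5_rel /cyc_adj /=;
  try (by case: hx); try (by case: hy);
  first [ by rewrite irr | by apply/idP | by apply/idP; rewrite sym
        | by apply/negbTE | by apply/negbTE; rewrite sym ].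
Qed.

Notation KK n := (n.+4.+3).

Definition hole (T : finType) (e : rel T) n (s : 'I_(KK n) -> T) : Prop :=
  [/\ symmetric e, irreflexive e, injective s &
      forall i j : 'I_(KK n), i != j -> e (s i) (s j) = ~~ cyc_adj i j].

Definition cc (T : finType) n (s : 'I_(KK n) -> T) (m : nat) : T := s (inord (m %% KK n)).

Lemma inord_mod n m : ((inord (m %% KK n)) : 'I_(KK n)) = m %% KK n :> nat.
Proof. by rewrite inordK // ltn_pmod. Qed.

Lemma cc_eq (T : finType) n (s : 'I_(KK n) -> T) : injective s ->
  forall a b, (cc s a == cc s b) = (a %% KK n == b %% KK n).
Proof. by move=> inj a b; rewrite /cc (inj_eq inj) -val_eqE /= !inord_mod. Qed.

Lemma modS1 m d : (m %% d).+1 %% d = m.+1 %% d.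
Proof. by rewrite -addn1 modnDml addn1. Qed.

Lemma s_cc (T : finType) n (s : 'I_(KK n) -> T) (i : 'I_(KK n)) : s i = cc s i.
Proof. by rewrite /cc modn_small // inord_val. Qed.

Lemma cc_per (T : finType) n (s : 'I_(KK n) -> T) m : cc s (m + KK n) = cc s m.
Proof. by rewrite /cc modnDr. Qed.


Lemma ce (T : finType) (e : rel T) n (s : 'I_(KK n) -> T) : hole e s ->
  forall a b, e (cc s a) (cc s b) = (a %% KK n != b %% KK n) &&
     ~~ ((a.+1 %% KK n == b %% KK n) || (b.+1 %% KK n == a %% KK n)).
Proof.
case=> sym irr inj hs a b; rewrite -(cc_eq inj); case: eqP => [->|/eqP ne]; first by rewrite irr.
rewrite /= /cc hs; last by apply: contra ne => /eqP E; rewrite /cc E.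
by rewrite /cyc_adj !inord_mod !modS1.
Qed.

Lemma cf (T : finType) (e : rel T) n (s : 'I_(KK n) -> T) : hole e s ->
  forall a b, nadj e (cc s a) (cc s b) =
     (a.+1 %% KK n == b %% KK n) || (b.+1 %% KK n == a %% KK n).
Proof.
move=> hh a b; have [_ _ inj _] := hh.
rewrite /nadj (ce hh) cc_eq //; case: eqP => [h|_] /=; last by rewrite negbK.
rewrite -(modS1 a) -(modS1 b) -h orbb.
have lt := ltn_pmod a (isT : 0 < KK n).
move: (a %% KK n) lt => x lt.
case: (ltngtP x.+1 (KK n)) => [l|l|e'].
- rewrite modn_small //; symmetry; apply/negbTE/eqP; lia.
- lia.
- rewrite e' modnn; symmetry; apply/negbTE/eqP; lia.
Qed.

Lemma cfD (T : finType) (e : rel T) n (s : 'I_(KK n) -> T) : hole e s ->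
  forall a i j, nadj e (cc s (a + i)) (cc s (a + j)) =
     (i.+1 %% KK n == j %% KK n) || (j.+1 %% KK n == i %% KK n).
Proof. by move=> hh a i j; rewrite (cf hh) -!addnS !eqn_modDl. Qed.

Lemma ccD_eq (T : finType) n (s : 'I_(KK n) -> T) : injective s ->
  forall a i j, (cc s (a + i) == cc s (a + j)) = (i %% KK n == j %% KK n).
Proof. by move=> inj a i j; rewrite cc_eq // eqn_modDl. Qed.

Lemma rebase (T : finType) n (s : 'I_(KK n) -> T) a m :
  exists2 d, d < KK n & cc s m = cc s (a + d).
Proof.
exists ((KK n - a %% KK n + m) %% KK n); first by rewrite ltn_pmod.
rewrite /cc; congr (s (inord _)).
rewrite modnDmr addnA.
have -> : a + (KK n - a %% KK n) = (a %/ KK n).+1 * KK n.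
  rewrite {1}(divn_eq a (KK n)) -addnA subnKC; last by rewrite ltnW // ltn_pmod.
  by rewrite mulSn addnC.
by rewrite modnMDl.
Qed.

Lemma perK n (Q : nat -> bool) : (forall m, Q (m + KK n) = Q m) ->
  forall j m, Q (m + j * KK n) = Q m.
Proof.
move=> per; elim=> [|j IH] m; first by rewrite mul0n addn0.
by rewrite mulSn addnA IH per.
Qed.

Lemma par0 n (Q : nat -> bool) : (forall m, Q (m + KK n) = Q m) ->
  (forall x, Q x -> Q x.+1 -> Q x.+2) -> forall a, Q a -> Q a.+1 -> forall m, Q m.
Proof.
move=> per st a Qa Qa1.
have all : forall j, Q (a + j) && Q (a + j).+1.
  elim=> [|j IH]; first by rewrite addn0 Qa Qa1.
  case/andP: IH => h1 h2; rewrite addnS h2 /=; exact: st.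
move=> m; rewrite -(perK per a).
have -> : m + a * KK n = a + (m + a * KK n - a) by lia.
by case/andP: (all (m + a * KK n - a)).
Qed.

Lemma par2 n (Q : nat -> bool) : (forall m, Q (m + KK n) = Q m) -> ~~ odd n ->
  forall b, Q b -> (forall m, Q m -> ~~ Q m.+1) ->
  (forall p, Q p -> ~~ Q p.+1 -> ~~ Q p.+2 -> False) -> False.
Proof.
move=> per ev b Qb ind H.
have all : forall j, Q (b + j.*2).
  elim=> [|j IH]; first by rewrite addn0.
  have n1 := ind _ IH.
  case Q2 : (Q (b + j.*2).+2); first by rewrite doubleS !addnS.
  by case: (H _ IH n1); rewrite Q2.
have := all (n./2 + 4).
have -> : b + (n./2 + 4).*2 = b.+1 + KK n.
  have := odd_double_half n; rewrite (negbTE ev) add0n => En.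
  rewrite -!muln2 in En *; lia.
by rewrite per; apply/negP/ind.
Qed.

Lemma par3 n (Q : nat -> bool) : (forall m, Q (m + KK n) = Q m) -> ~~ odd n ->
  (forall m, Q m -> ~~ Q m.+1) -> (forall a, ~~ Q a -> ~~ Q a.+1 -> False) -> False.
Proof.
move=> per ev ind H.
have alt : forall x, Q x.+1 = ~~ Q x.
  move=> x; case Qx : (Q x); first by apply/negbTE/ind.
  by case Q1 : (Q x.+1) => //; case: (H x); rewrite ?Qx ?Q1.
have all : forall j, Q (j.*2) = Q 0.
  by elim=> [|j IH] //; rewrite doubleS alt alt negbK.
have := all (n./2 + 3).
have -> : (n./2 + 3).*2 = (KK n).-1.
  have := odd_double_half n; rewrite (negbTE ev) add0n => En.
  rewrite -!muln2 in En *; lia.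
move=> E.
have := per 0; rewrite add0n.
have -> : KK n = (KK n).-1.+1 by [].
by rewrite alt E; case: (Q 0).
Qed.

Ltac neqA := repeat match goal with H : forall j : nat, _ |- _ => rewrite H end.
Ltac nonA := neqA.
Ltac fin hh sym irr inj :=
  first [ done
        | by rewrite (nadj_sym sym)
        | by rewrite (cfD hh) !modn_small
        | by rewrite (eE irr) (ccD_eq inj) (cfD hh) !modn_small
        | by rewrite (eE irr); neqA; rewrite andTb; nonA
        | by rewrite sym (eE irr); neqA; rewrite andTb; nonA
        | match goal with H : forall m, nadj _ ?x (cc _ m) |- _ =>
            first [ by apply: H | by rewrite (nadj_sym sym); apply: H ] end ].

Lemma zstep (T : finType) (e : rel T) n (s : 'I_(KK n) -> T) :
  hole e s -> ~ has_induced e banner_rel ->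
  forall w a, (forall j, w != cc s j) ->
  nadj e w (cc s (a+0)) -> nadj e w (cc s (a+1)) -> nadj e w (cc s (a+2)).
Proof.
move=> hh nb w a wA P0 P1; apply: contraT => N2.
have [sym irr inj _] := hh.
case: (boolP (nadj e w (cc s (a+3)))) => P3; last first.
  case: nb; apply: (@banner_of _ e w (cc s (a+0)) (cc s (a+1)) (cc s (a+2)) (cc s (a+3)));
  fin hh sym irr inj.
case: (boolP (nadj e w (cc s (a+4)))) => P4; last first.
  case: nb; apply: (@banner_of _ e (cc s (a+0)) (cc s (a+1)) w (cc s (a+3)) (cc s (a+4)));
  fin hh sym irr inj.
case: (boolP (nadj e w (cc s (a+5)))) => P5; last first.
  case: nb; apply: (@banner_of _ e (cc s (a+0)) (cc s (a+1)) w (cc s (a+4)) (cc s (a+5)));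
  fin hh sym irr inj.
case: nb; apply: (@banner_of _ e (cc s (a+4)) (cc s (a+5)) w (cc s (a+1)) (cc s (a+2)));
fin hh sym irr inj.
Qed.

Lemma zlemma (T : finType) (e : rel T) n (s : 'I_(KK n) -> T) :
  hole e s -> ~ has_induced e banner_rel ->
  forall w a, (forall j, w != cc s j) ->
  nadj e w (cc s a) -> nadj e w (cc s a.+1) -> forall m, nadj e w (cc s m).
Proof.
move=> hh nb w a wA.
apply: (par0 (n:=n) (Q := fun m => nadj e w (cc s m))).
  by move=> m; rewrite cc_per.
move=> x h0 h1; have := zstep (a:=x) hh nb wA; rewrite addn0 addn1 addn2; exact.
Qed.

Lemma trip (T : finType) (e : rel T) n (s : 'I_(KK n) -> T) :
  hole e s -> forall a d, d < KK n ->
  nadj e (cc s (a+d)) (cc s (a+0)) -> nadj e (cc s (a+d)) (cc s (a+1)) -> False.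
Proof.
move=> hh a d dK; rewrite !(cfD hh) (modn_small dK) !(modn_small (m:=0)) // !(modn_small (m:=1)) //
  !(modn_small (m:=2)) //.
case: (ltngtP d.+1 (KK n)) => [l|l|E].
- rewrite (modn_small l); move=> /orP[/eqP|/eqP] ? /orP[/eqP|/eqP] ?; lia.
- lia.
- rewrite E modnn; move=> /orP[/eqP|/eqP] ? /orP[/eqP|/eqP] ?; lia.
Qed.

Lemma prop (T : finType) (e : rel T) n (s : 'I_(KK n) -> T) :
  hole e s -> ~ has_induced e banner_rel -> ~ has_induced e C5_rel -> ~~ odd n ->
  forall z u v, (forall m, nadj e z (cc s m)) -> nadj e z u ->
  ~ (forall m, nadj e u (cc s m)) -> ~ (forall m, nadj e v (cc s m)) ->
  nadj e u v -> nadj e z v.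
Proof.
move=> hh nb nc ev z u v Zz zu Zu Zv uv; apply: contraT => zv; exfalso.
have [sym irr inj _] := hh.
have per : forall x m, nadj e x (cc s (m + KK n)) = nadj e x (cc s m).
  by move=> x m; rewrite cc_per.
have vA : forall j, v != cc s j.
  by move=> j; apply: contra zv => /eqP ->; exact: Zz.
have ezv : e z v.
  rewrite (eE irr) zv andbT; apply/eqP => E; apply: Zv; rewrite -E; exact: Zz.
case: (classic (exists b, nadj e v (cc s b))) => [[b vb]|nov].
  have vind : forall m, nadj e v (cc s m) -> ~~ nadj e v (cc s m.+1).
    move=> m h1; apply/negP => h2; apply: Zv; exact: (zlemma hh nb vA h1 h2).
  apply: (par2 (Q := fun m => nadj e v (cc s m)) (per v) ev vb vind) => p Pp Np1 Np2.
  rewrite -[p]addn0 in Pp; rewrite -addn1 in Np1; rewrite -addn2 in Np2.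
  case: (boolP (nadj e v (cc s (p+3)))) => P3.
    case: nc; apply: (@c5_of _ e v (cc s (p+0)) (cc s (p+1)) (cc s (p+2)) (cc s (p+3)));
    fin hh sym irr inj.
  case: nb; apply: (@banner_of _ e (cc s (p+2)) (cc s (p+3)) z (cc s (p+0)) v);
  fin hh sym irr inj.
have novm : forall m, ~~ nadj e v (cc s m).
  by move=> m; apply/negP => h; apply: nov; exists m.
have uA : forall j, u != cc s j.
  move=> j; apply/eqP => E; apply: nov; exists j; by rewrite (nadj_sym sym) -E.
have uind : forall m, nadj e u (cc s m) -> ~~ nadj e u (cc s m.+1).
  move=> m h1; apply/negP => h2; apply: Zu; exact: (zlemma hh nb uA h1 h2).
apply: (par3 (Q := fun m => nadj e u (cc s m)) (per u) ev uind) => a Na Na1.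
rewrite -[a]addn0 in Na; rewrite -addn1 in Na1.
case: nb; apply: (@banner_of _ e (cc s (a+0)) (cc s (a+1)) z u v);
fin hh sym irr inj.
Qed.

Lemma connect_indP (T : finType) (g : rel T) (P : T -> Prop) x y :
  connect g x y -> P x -> (forall u v, P u -> g u v -> P v) -> P y.
Proof.
move/connectP=> [p pth ->] Px st; elim: p x pth Px => [|w p IH] x //= /andP[gxw pth] Px.
apply: (IH w pth); exact: st Px gxw.
Qed.

Lemma main_n (T : finType) (e : rel T) n (s : 'I_(KK n) -> T) (A : {set T}) :
  hole e s -> ~ has_induced e banner_rel -> ~ has_induced e C5_rel -> ~~ odd n ->
  A = [set s i | i in 'I_(KK n)] ->
  (exists x y z, [/\ x \in A, y \in A & cotriangle e x y z]) ->
  exists H : {set T},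
    [/\ homogeneous e H, A \subset H &
        forall x y z, x \in H -> y \in H -> z \in H -> cotriangle e x y z ->
          ~ (x \in A /\ y \in A)].
Proof.
move=> hh nb nc ev Adef ex.
have [sym irr inj hs] := hh.
set Z := [set z | [forall i : 'I_(KK n), nadj e z (s i)]].
have ZP : forall z, (z \in Z) <-> (forall m, nadj e z (cc s m)).
  move=> z; split.
    by rewrite inE => /forallP H m; rewrite /cc; apply: H.
  by move=> H; rewrite inE; apply/forallP => i; rewrite s_cc; apply: H.
have tri1 : forall a z, nadj e z (cc s a) -> nadj e z (cc s a.+1) -> z \in Z.
  move=> a z h0 h1; apply/ZP.
  have zA : forall j, z != cc s j.
    move=> j; have [d dK ->] := rebase s a j; apply/eqP => E.
    apply: (trip (a:=a) hh dK); rewrite -E ?addn0 ?addn1 //.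
  exact: (zlemma hh nb zA h0 h1).
have tri : forall (i j : 'I_(KK n)) z, nadj e (s i) (s j) -> nadj e z (s i) -> nadj e z (s j) -> z \in Z.
  move=> i j z; rewrite !s_cc (cf hh) => /orP[] E.
    have -> : cc s j = cc s i.+1 by apply/eqP; rewrite cc_eq // eq_sym.
    exact: tri1.
  have -> : cc s i = cc s j.+1 by apply/eqP; rewrite cc_eq // eq_sym.
  by move=> h1 h0; exact: tri1 h0 h1.
set g := [rel u v | [&& nadj e u v, u \notin Z & v \notin Z]].
set H := [set v | [exists i, connect g (s i) v]].
have HP : forall v, v \in H -> v \notin Z /\ forall z, z \in Z -> nadj e z v.
  move=> v; rewrite inE => /existsP[i ci].
  apply: (connect_indP (P := fun v => v \notin Z /\ forall z, z \in Z -> nadj e z v) ci).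
    split.
      by apply/negP => /ZP h; have := h i; rewrite -s_cc /nadj eqxx.
    by move=> z /ZP Zz; rewrite s_cc; exact: Zz.
  move=> u w [uZ uc] /and3P[uw _ wZ]; split => // z zZ.
  apply: (prop (z:=z) (u:=u) hh nb nc ev).
  - by apply/ZP.
  - exact: uc.
  - by move=> h; move/negP: uZ; apply; apply/ZP.
  - by move=> h; move/negP: wZ; apply; apply/ZP.
  - done.
have AH : A \subset H.
  by rewrite Adef; apply/subsetP => x /imsetP[i _ ->]; rewrite inE; apply/existsP; exists i; exact: connect0.
have [z0 z0Z] : exists z, z \in Z.
  case: ex => x [y [z [xA yA /and4P[nxy nyz nxz /and3P[exy eyz exz]]]]].
  move: xA yA; rewrite Adef => /imsetP[i _ xi] /imsetP[j _ yj]; subst x y.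
  exists z; apply: (tri i j).
  - by rewrite /nadj nxy exy.
  - by rewrite /nadj eq_sym nxz sym exz.
  - by rewrite /nadj eq_sym nyz sym eyz.
exists H; split => //; last first.
  move=> x y z xH yH zH /and4P[nxy nyz nxz /and3P[exy eyz exz]] [].
  rewrite Adef => /imsetP[i _ xi] /imsetP[j _ yj]; subst x y.
  have zZ : z \in Z.
    apply: (tri i j).
    - by rewrite /nadj nxy exy.
    - by rewrite /nadj eq_sym nxz sym exz.
    - by rewrite /nadj eq_sym nyz sym eyz.
  by have [/negP] := HP z zH.
split.
  apply/andP; split.
    apply: leq_trans (subset_leq_card AH).
    by rewrite Adef card_imset // card_ord.
  rewrite -cardsT; apply: proper_card; rewrite properT; apply/negP => /eqP HT.
  have : z0 \in H by rewrite HT inE.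
  by move/HP => [/negP].
move=> v vH; case: (boolP (v \in Z)) => vZ.
  right => h hH; have [_ c] := HP h hH; have := c v vZ.
  by rewrite /nadj => /andP[_].
left => h hH; rewrite (eE irr); apply/andP; split.
  by apply/eqP => E; move: vH; rewrite E hH.
apply/negP => vh; move/negP: vH; apply.
have := hH; rewrite inE => /existsP[i ci]; rewrite inE; apply/existsP; exists i.
apply: connect_trans ci (connect1 _).
rewrite /= (nadj_sym sym) vh vZ /=.
by have [-> _] := HP h hH.
Qed.

Theorem lemma3 (T : finType) (e : rel T) (A : {set T}) :
  simple_graph e ->
  ~ has_induced e banner_rel ->
  ~ has_induced e C5_rel ->
  odd_antihole e A ->
  (exists x y z, [/\ x \in A, y \in A & cotriangle e x y z]) ->
  exists H : {set T},
    [/\ homogeneous e H, A \subset H &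
        forall x y z, x \in H -> y \in H -> z \in H -> cotriangle e x y z ->
          ~ (x \in A /\ y \in A)].
Proof.
move=> [sym irr] nb nc [k [s [oddk k4 inj Adef hs]]] ex.
move: s inj hs Adef; case: k oddk k4 => [|[|[|[|[|[|[|n]]]]]]] oddk k4 //.
  move=> s inj hs _; case: nc.
  pose o (i : nat) (h : i < 5) := Ordinal h.
  apply: (@c5_of _ e (s (@o 0 isT)) (s (@o 1 isT)) (s (@o 2 isT)) (s (@o 3 isT)) (s (@o 4 isT)) sym irr);
  by rewrite ?/nadj ?(inj_eq inj) hs.
move=> s inj hs Adef.
have ev : ~~ odd n by move: oddk; rewrite /= !negbK.
exact: (@main_n T e n s A (And4 sym irr inj hs) nb nc ev Adef ex).
Qed.
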